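(* Let $n\geq1$, $\eta\in\Omega$, $l\in\{1,\ldots,n\}$ and $(r_1,\ldots,r_l)\in\mathbb N^l$. For $1\leq i\leq l$ let $T_{i,\eta}+r_i=\{v+(r_i,r_i):v\in T_{i,\eta}\}$. Then $$\mathrm{span}_{\mathbb C}\{\bar v: v\in T_{0,\eta}\cup\textstyle\bigcup_{i=1}^l(T_{i,\eta}+r_i)\}=\mathrm{span}_{\mathbb C}\{\bar v:v\in\bigcup_{i=0}^lT_{i,\eta}\}.$$ In particular, $\overline{v_{l,\eta}+(r,r)}\in\mathrm{span}_{\mathbb C}\{\bar v:v\in\bigcup_{i=0}^lT_{i,\eta}\}$ for all $r\in\mathbb N$.
   Context: $n\geq1$ is fixed. $\Lambda_{2,n}=\{\alpha\in\mathbb N^2:1\leq\alpha_1+\alpha_2\leq n\}$, $\lambda_{2,n}=|\Lambda_{2,n}|$; for $v\in\mathbb N^2$, $\bar v=\big(\binom{v_1}{\alpha_1}\binom{v_2}{\alpha_2}\big)_{\alpha\in\Lambda_{2,n}}\in\mathbb C^{\lambda_{2,n}}$. $\Omega$ is the set of sequences $\eta=(z,d_0,d_1,\ldots,d_r)$ with $z\in\{0,1\}$, $d_0=0$, $d_i\geq1$ for $1\leq i\leq r$, $\sum_{i=0}^rd_i=n$. For $j\in\{1,\ldots,n\}$ let $t\in\{1,\ldots,r\}$ be unique with $\sum_{i=0}^{t-1}d_i<j\leq\sum_{i=0}^td_i$, $c=j-\sum_{i=0}^{t-1}d_i$; $v_{j,\eta}=(\sum_{i\text{ odd},i<t}d_i+c,0)$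 if $z=1,t$ odd; $(0,\sum_{i\text{ even},i<t}d_i+c)$ if $z=1,t$ even; $(0,\sum_{i\text{ odd},i<t}d_i+c)$ if $z=0,t$ odd; $(\sum_{i\text{ even},i<t}d_i+c,0)$ if $z=0,t$ even. $T_{j,\eta}=\{v_{j,\eta}+p(1,1):0\leq p\leq n-j\}$ for $1\leq j\leq n$, and $T_{0,\eta}=\{(p,p):1\leq p\leq n\}$. *)

(* Defs.v *)
From HB Require Import structures.
From mathcomp Require Import all_boot all_order all_algebra algC.
Set Implicit Arguments. Unset Strict Implicit. Unset Printing Implicit Defensive.
Import Order.TTheory GRing.Theory Num.Theory.

(* Lambda_{2,n} = {alpha in N^2 : 1 <= alpha_1 + alpha_2 <= n}, as a finite type
   (both coordinates are automatically <= n). *)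
Definition Lam (n : nat) := {a : 'I_n.+1 * 'I_n.+1 | (0 < a.1 + a.2 <= n)%N}.

(* The complex vector space C^{lambda_{2,n}}, coordinates indexed by Lam n.
   Complex numbers are the algebraic complex numbers algC (all vectors involved
   have integer entries). *)
Definition CLam (n : nat) := {ffun Lam n -> algC^o}.

Definition vbar (n : nat) (v : nat * nat) : CLam n :=
  [ffun a : Lam n => (('C(v.1, (val a).1) * 'C(v.2, (val a).2))%N)%:R%R].

Local Open Scope ring_scope.
Definition spanC (n : nat) (S : seq (nat * nat)) : {vspace CLam n} :=
  <<[seq vbar n v | v <- S]>>%VS.
Local Close Scope ring_scope.

(* eta = (z, d_0, d_1, ..., d_r) is represented by z : bool (z = 1 iff true)
   and ds = [:: d_1; ...; d_r]; d_0 = 0 is implicit. *)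
Definition in_Omega (n : nat) (z : bool) (ds : seq nat) : Prop :=
  all (fun d => 0 < d) ds /\ sumn ds = n.

Definition dseq (ds : seq nat) : seq nat := 0 :: ds.

Definition psum (ds : seq nat) (t : nat) : nat := sumn (take t (dseq ds)).

Definition tidx (ds : seq nat) (j : nat) : nat :=
  find (fun t => j <= psum ds t.+1) (iota 0 (size ds).+1).

Definition odd_sum (ds : seq nat) (t : nat) : nat :=
  \sum_(i < t | odd i) nth 0 (dseq ds) i.
Definition even_sum (ds : seq nat) (t : nat) : nat :=
  \sum_(i < t | ~~ odd i) nth 0 (dseq ds) i.

Definition v_eta (z : bool) (ds : seq nat) (j : nat) : nat * nat :=
  let t := tidx ds j in
  let c := j - psum ds t in
  if z then
    (if odd t then (odd_sum ds t + c, 0) else (0, even_sum ds t + c))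
  else
    (if odd t then (0, odd_sum ds t + c) else (even_sum ds t + c, 0)).

Definition T_eta (n : nat) (z : bool) (ds : seq nat) (j : nat) : seq (nat * nat) :=
  if j == 0 then [seq (p, p) | p <- iota 1 n]
  else [seq ((v_eta z ds j).1 + p, (v_eta z ds j).2 + p) | p <- iota 0 (n - j).+1].

Definition shiftT (T : seq (nat * nat)) (r : nat) : seq (nat * nat) :=
  [seq (v.1 + r, v.2 + r) | v <- T].

(* Main.v *)
Require Import Defs.
From HB Require Import structures.
From mathcomp Require Import all_boot all_order all_algebra algC.
From mathcomp Require Import zify ring.

Set Implicit Arguments. Unset Strict Implicit. Unset Printing Implicit Defensive.
Import Order.TTheory GRing.Theory Num.Theory.
Local Open Scope ring_scope.


Definition D1 {K : fieldType} {vT : vectType K} (F : nat -> nat -> vT) := fun x y => F x.+1 y - F x y.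
Definition D2 {K : fieldType} {vT : vectType K} (F : nat -> nat -> vT) := fun x y => F x y.+1 - F x y.

Fixpoint deg {K : fieldType} {vT : vectType K} (d : nat) (F : nat -> nat -> vT) : Prop :=
  match d with
  | 0 => forall x y, F x.+1 y = F x y /\ F x y.+1 = F x y
  | d'.+1 => deg d' (D1 F) /\ deg d' (D2 F)
  end.

Lemma deg_ext {K : fieldType} {vT : vectType K} d (F G : (nat -> nat -> vT)) : (forall x y, F x y = G x y) -> deg d F -> deg d G.
Proof.
elim: d F G => [|d IH] F G E /=.
  by move=> H x y; rewrite -!E.
case=> H1 H2; split.
  by apply: (IH _ _ _ H1) => x y; rewrite /D1 !E.
by apply: (IH _ _ _ H2) => x y; rewrite /D2 !E.
Qed.

Lemma deg_swap {K : fieldType} {vT : vectType K} d (F : (nat -> nat -> vT)) : deg d F -> deg d (fun x y => F y x).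
Proof.
elim: d F => [|d IH] F /=.
  by move=> H x y; case: (H y x).
case=> H1 H2; split.
  by apply: (deg_ext _ (IH _ H2)).
by apply: (deg_ext _ (IH _ H1)).
Qed.

Lemma deg_add {K : fieldType} {vT : vectType K} d (F G : (nat -> nat -> vT)) : deg d F -> deg d G -> deg d (fun x y => F x y + G x y).
Proof.
elim: d F G => [|d IH] F G /=.
  by move=> H1 H2 x y; case: (H1 x y) => -> ->; case: (H2 x y) => -> ->.
case=> H1 H2 [G1 G2]; split.
  apply: (deg_ext _ (IH _ _ H1 G1)) => x y; rewrite /D1 opprD addrACA //.
apply: (deg_ext _ (IH _ _ H2 G2)) => x y; rewrite /D2 opprD addrACA //.
Qed.

Lemma deg_shift2 {K : fieldType} {vT : vectType K} d (F : (nat -> nat -> vT)) : deg d F -> deg d (fun x y => F x y.+1).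
Proof.
elim: d F => [|d IH] F /=.
  by move=> H x y; case: (H x y.+1).
case=> H1 H2; split.
  exact: (deg_ext _ (IH _ H1)).
exact: (deg_ext _ (IH _ H2)).
Qed.

Lemma deg_D {K : fieldType} {vT : vectType K} d (F : (nat -> nat -> vT)) : deg d.+1 F -> deg d (fun x y => F x.+1 y.+1 - F x y).
Proof.
case=> H1 H2.
apply: (deg_ext _ (deg_add (deg_shift2 H1) H2)) => x y.
by rewrite /D1 /D2 addrA subrK.
Qed.

Fixpoint iterD2 {K : fieldType} {vT : vectType K} k (F : (nat -> nat -> vT)) : (nat -> nat -> vT) := match k with 0 => F | k'.+1 => iterD2 k' (D2 F) end.

Lemma deg_iterD2 {K : fieldType} {vT : vectType K} k e (F : (nat -> nat -> vT)) : deg (k + e) F -> deg e (iterD2 k F).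
Proof.
elim: k F => [|k IH] F //= [_ H]; exact: IH.
Qed.

Fixpoint udeg {K : fieldType} {vT : vectType K} (d : nat) (h : nat -> vT) : Prop :=
  match d with
  | 0 => forall q, h q.+1 = h q
  | d'.+1 => udeg d' (fun q => h q.+1 - h q)
  end.

Lemma udeg_ext {K : fieldType} {vT : vectType K} d (h g : nat -> vT) : (forall q, h q = g q) -> udeg d h -> udeg d g.
Proof.
elim: d h g => [|d IH] h g E /=.
  by move=> H q; rewrite -!E.
by apply: IH => q; rewrite !E.
Qed.

Lemma deg_diag {K : fieldType} {vT : vectType K} e (H : (nat -> nat -> vT)) c : deg e H -> udeg e (fun q => H (c + q)%N q).
Proof.
elim: e H => [|e IH] H /=.
  by move=> D q; rewrite addnS; case: (D (c+q)%N q.+1) => -> _; case: (D (c+q)%N q) => _ ->.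
move=> D; have := IH _ (deg_D D).
by apply: udeg_ext => q; rewrite addnS.
Qed.

Lemma uspan {K : fieldType} {vT : vectType K} d (h : nat -> vT) (S : {vspace vT}) s :
  udeg d h -> (forall p, (p <= d)%N -> h (s + p)%N \in S) -> forall q, h q \in S.
Proof.
elim: d h s => [|d IH] h s /=.
  move=> Hc Hs q.
  have E : forall k, h k = h 0%N by elim=> // k; rewrite Hc.
  by rewrite E -(E s) -(addn0 s) Hs.
move=> Hd Hs.
have Hg : forall q, h q.+1 - h q \in S.
  apply: (IH _ s Hd) => p Hp.
  by rewrite -addnS; apply: memvB; apply: Hs; lia.
have Hup : forall k, h (s + k)%N \in S.
  elim=> [|k IHk]; first by rewrite Hs.
  by rewrite addnS -(subrK (h (s+k)%N) (h (s+k).+1)); apply: memvD.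
have Hdn : forall k q, (q + k)%N = s -> h q \in S.
  elim=> [|k IHk] q Hq; first by move: (Hup 0%N); rewrite addn0 -Hq addn0.
  have Hq1 : h q.+1 \in S by apply: (IHk q.+1); rewrite addSnnS.
  rewrite -(opprK (h q)) -(addKr (h q.+1) (- h q)) opprD opprK.
  by apply: memvB => //; rewrite addrC.
move=> q; case: (leqP q s) => Hqs.
  by apply: (Hdn (s - q)%N); rewrite subnKC.
by rewrite -(subnKC (ltnW Hqs)) Hup.
Qed.

Lemma memvBr {K : fieldType} {vT : vectType K} (S : {vspace vT}) (u v : vT) : u \in S -> (u - v \in S) = (v \in S).
Proof.
move=> Hu; apply/idP/idP => H.
  by rewrite -(opprK v) -(addKr u (- v)) opprD opprK; apply: memvD => //; rewrite memvN.
exact: memvB.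
Qed.

Lemma iterD2_mem {K : fieldType} {vT : vectType K} k (F : (nat -> nat -> vT)) (S : {vspace vT}) x y :
  (forall j, (0 < j <= k)%N -> F x (y + j)%N \in S) ->
  (iterD2 k F x y \in S) = (F x y \in S).
Proof.
elim: k F => [|k IH] F //= H.
rewrite IH /D2.
  by rewrite memvBr // -addn1 H.
move=> j Hj; rewrite -addnS; apply: memvB; apply: H; lia.
Qed.

Lemma core {K : fieldType} {vT : vectType K} n i c s (F : (nat -> nat -> vT)) (S : {vspace vT}) :
  (i <= n)%N -> deg n F ->
  (forall j, (0 < j <= i)%N -> forall q, F (c + q)%N (q + j)%N \in S) ->
  (forall p, (p <= n - i)%N -> F (c + (s + p))%N (s + p)%N \in S) ->
  forall q, F (c + q)%N q \in S.
Proof.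
move=> Hin Hd Hk Hw.
have Hg : deg (n - i) (iterD2 i F) by apply: deg_iterD2; rewrite subnKC.
have Hu := deg_diag c Hg.
have E : forall q, (iterD2 i F (c + q)%N q \in S) = (F (c + q)%N q \in S).
  by move=> q; apply: iterD2_mem => j Hj; apply: Hk.
move=> q; rewrite -E; apply: (uspan Hu (s := s)) => p Hp.
by rewrite /= E Hw.
Qed.


Local Close Scope ring_scope.

Set Implicit Arguments. Unset Strict Implicit. Unset Printing Implicit Defensive.
Import Order.TTheory GRing.Theory Num.Theory.
Local Open Scope ring_scope.

Definition Bf (p q : nat) : nat -> nat -> algC^o :=
  fun x y => (('C(x, p) * 'C(y, q))%N)%:R.

Lemma deg_const d (a : algC^o) : deg d (fun _ _ => a).
Proof.
elim: d a => [|d IH] a //=; split; apply: (deg_ext _ (IH 0)) => x y;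
  by rewrite /D1 /D2 subrr.
Qed.

Lemma degB d : forall p q, (p + q <= d)%N -> deg d (Bf p q).
Proof.
elim: d => [|d IH] p q Hpq /=.
  have -> : p = 0%N by lia.
  have -> : q = 0%N by lia.
  by move=> x y; rewrite /Bf !bin0.
split.
  case: p Hpq => [|p] Hpq.
    by apply: (deg_ext _ (deg_const d 0)) => x y; rewrite /D1 /Bf !bin0 subrr.
  apply: (deg_ext _ (IH p q _)); last by lia.
  by move=> x y; rewrite /D1 /Bf binS mulnDl natrD addrAC subrr add0r.
case: q Hpq => [|q] Hpq.
  by apply: (deg_ext _ (deg_const d 0)) => x y; rewrite /D2 /Bf !bin0 subrr.
apply: (deg_ext _ (IH p q _)); last by lia.
by move=> x y; rewrite /D2 /Bf binS mulnDr natrD addrAC subrr add0r.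
Qed.

Lemma deg_ffun (I : finType) d (f : I -> nat -> nat -> algC^o) :
  (forall a, deg d (f a)) ->
  deg d (fun x y => ([ffun a => f a x y] : {ffun I -> algC^o})).
Proof.
elim: d f => [|d IH] f /= H.
  move=> x y; split; apply/ffunP => a; rewrite !ffunE; by case: (H a x y).
split.
  apply: (deg_ext _ (IH (fun a => D1 (f a)) (fun a => (H a).1))) => x y.
  by apply/ffunP => a; rewrite !ffunE.
apply: (deg_ext _ (IH (fun a => D2 (f a)) (fun a => (H a).2))) => x y.
by apply/ffunP => a; rewrite !ffunE.
Qed.

Lemma deg_vbar n : deg n (fun x y => vbar n (x, y)).
Proof.
apply: (deg_ext _ (deg_ffun (fun a : Lam n => _))).
  by move=> x y; apply/ffunP => a; rewrite !ffunE.
move=> a /=; apply: degB; case/andP: (valP a) => _ //.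
Qed.

Lemma vbar00 n : vbar n (0, 0)%N = 0.
Proof.
apply/ffunP => a; rewrite !ffunE /=.
case: a => [[[[|i] Hi] [[|j] Hj]] H] //=.
Qed.

Local Close Scope ring_scope.

Set Implicit Arguments. Unset Strict Implicit. Unset Printing Implicit Defensive.

Lemma sumn_take_S (s : seq nat) t : sumn (take t.+1 s) = sumn (take t s) + nth 0 s t.
Proof.
elim: s t => [|x s IH] [|t] /=; rewrite ?take0 /= ?addn0 ?add0n //.
by rewrite IH addnA.
Qed.

Lemma psumS ds t : psum ds t.+1 = psum ds t + nth 0 (dseq ds) t.
Proof. exact: sumn_take_S. Qed.

Lemma psum_mono ds t t' : t <= t' -> psum ds t <= psum ds t'.
Proof.
move=> H; rewrite -(subnKC H); elim: (t' - t) => [|k IH]; first by rewrite addn0.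
by rewrite addnS psumS; apply: leq_trans IH (leq_addr _ _).
Qed.

Lemma psum_last ds : psum ds (size ds).+1 = sumn ds.
Proof. by rewrite /psum /dseq take_oversize. Qed.

Lemma tidx_char ds j t : t <= size ds -> psum ds t < j <= psum ds t.+1 -> tidx ds j = t.
Proof.
move=> Ht /andP [H1 H2]; rewrite /tidx.
have -> : (size ds).+1 = t + ((size ds).+1 - t) by rewrite subnKC // ltnW.
rewrite iotaD find_cat.
have -> : has (fun t0 => j <= psum ds t0.+1) (iota 0 t) = false.
  apply/hasPn => t' /[!mem_iota] /andP [_ Ht'] /=; rewrite -ltnNge.
  by apply: leq_ltn_trans H1; apply: psum_mono.
rewrite size_iota add0n subSn //=. by rewrite H2 addn0.
Qed.

Lemma tidx0 ds : tidx ds 0 = 0.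
Proof. by rewrite /tidx /=. Qed.

Definition Xs (z : bool) ds t := \sum_(i < t | odd i == z) nth 0 (dseq ds) i.

Lemma Xs0 z ds : Xs z ds 0 = 0.
Proof. by rewrite /Xs big_ord0. Qed.

Lemma XsS z ds t : Xs z ds t.+1 = Xs z ds t + (if odd t == z then nth 0 (dseq ds) t else 0).
Proof. by rewrite /Xs big_mkcond big_ord_recr /= -big_mkcond. Qed.

Lemma odd_sumE ds t : odd_sum ds t = Xs true ds t.
Proof. by rewrite /odd_sum /Xs; apply: eq_bigl => i; rewrite eqb_id. Qed.
Lemma even_sumE ds t : even_sum ds t = Xs false ds t.
Proof. by rewrite /even_sum /Xs; apply: eq_bigl => i; case: (odd i). Qed.

Definition XX z ds j := Xs z ds (tidx ds j) +
  (if odd (tidx ds j) == z then j - psum ds (tidx ds j) else 0).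
Definition YY z ds j := Xs (~~ z) ds (tidx ds j) +
  (if odd (tidx ds j) == z then 0 else j - psum ds (tidx ds j)).

Lemma vv_XY z ds j : v_eta z ds j =
  if odd (tidx ds j) == z then (XX z ds j, 0) else (0, YY z ds j).
Proof.
rewrite /v_eta /XX /YY odd_sumE even_sumE.
by case: z; case: (odd (tidx ds j)).
Qed.

Definition tinv ds j := tidx ds j <= size ds /\ psum ds (tidx ds j) <= j <= psum ds (tidx ds j).+1.

Lemma step n z ds j : in_Omega n z ds -> j < n -> tinv ds j ->
  tinv ds j.+1 /\
  (XX z ds j.+1, YY z ds j.+1) =
    (if odd (tidx ds j.+1) == z then (XX z ds j + 1, YY z ds j)
     else (XX z ds j, YY z ds j + 1)).
Proof.
move=> [Hpos Hsum] Hjn [Ht /andP [H1 H2]].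
rewrite /XX /YY.
case: (ltnP j (psum ds (tidx ds j).+1)) => Hc'.
  have E : tidx ds j.+1 = tidx ds j.
    by apply: tidx_char => //; rewrite ltnS H1 Hc'.
  split; first by rewrite /tinv E; split => //; rewrite (leqW H1) Hc'.
  rewrite E; case: ifP => _; congr pair; lia.
set t := tidx ds j in Ht H1 H2 Hc' *.
have Ej : j = psum ds t.+1 by apply/eqP; rewrite eqn_leq H2 Hc'.
have Hts : t < size ds.
  rewrite ltn_neqAle Ht andbT; apply/negP => /eqP E.
  by move: Hjn; rewrite Ej E psum_last Hsum ltnn.
have Hd : 0 < nth 0 ds t by move/allP: Hpos; apply; rewrite mem_nth.
have E : tidx ds j.+1 = t.+1.
  apply: tidx_char => //; rewrite -Ej ltnSn /= psumS /=; lia.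
have Et := psumS ds t.
split; first by rewrite /tinv E; split => //; apply/andP; split; [rewrite -Ej; exact: leqnSn | rewrite psumS -Ej /=; lia].
rewrite E !XsS /=.
move: Et; rewrite -Ej => Et.
by case: z; case: (odd t) => /=; congr pair; lia.
Qed.

Definition INV z ds j := tinv ds j /\ XX z ds j + YY z ds j = j /\
  (forall k, k <= XX z ds j -> exists2 i, i <= j & v_eta z ds i = (k, 0)) /\
  (forall k, k <= YY z ds j -> exists2 i, i <= j & v_eta z ds i = (0, k)).

Lemma inv_all n z ds : in_Omega n z ds -> forall j, j <= n -> INV z ds j.
Proof.
move=> Hom; elim=> [|j IH] Hj.
  have E0 : XX z ds 0 = 0 /\ YY z ds 0 = 0.
    by rewrite /XX /YY tidx0 !Xs0; case: ifP.
  have V0 : v_eta z ds 0 = (0, 0) by rewrite vv_XY E0.1 E0.2; case: ifP.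
  split; first by rewrite /tinv tidx0.
  rewrite E0.1 E0.2; split => //; split => k; rewrite leqn0 => /eqP ->; by exists 0.
have [Ti [S [CX CY]]] := IH (ltnW Hj).
have [Ti' E] := step Hom Hj Ti.
have V := vv_XY z ds j.+1.
split => //.
move: E V; case: ifP => _ [-> ->] V; split; first lia.
- split => k Hk.
    case: (leqP k (XX z ds j)) => Hk'.
      by have [i Hi Vi] := CX k Hk'; exists i => //; apply: leqW.
    by exists j.+1 => //; rewrite V; congr pair; lia.
  by have [i Hi Vi] := CY k Hk; exists i => //; apply: leqW.
- lia.
- split => k Hk.
    by have [i Hi Vi] := CX k Hk; exists i => //; apply: leqW.
  case: (leqP k (YY z ds j)) => Hk'.
    by have [i Hi Vi] := CY k Hk'; exists i => //; apply: leqW.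
  by exists j.+1 => //; rewrite V; congr pair; lia.
Qed.

Local Close Scope ring_scope.

Set Implicit Arguments. Unset Strict Implicit. Unset Printing Implicit Defensive.
Import Order.TTheory GRing.Theory Num.Theory.

Lemma veta0 z ds : v_eta z ds 0 = (0, 0)%N.
Proof. rewrite vv_XY /XX /YY tidx0 !Xs0; by case: (_ == z); rewrite ?sub0n ?add0n. Qed.

Lemma AX n z ds i : in_Omega n z ds -> (0 < i <= n)%N ->
  (exists c, v_eta z ds i = (c, 0)%N /\ forall jj, (0 < jj <= i)%N ->
      exists2 i', (i' < i)%N & v_eta z ds i' = (c - jj, jj - c)%N) \/
  (exists c, v_eta z ds i = (0, c)%N /\ forall jj, (0 < jj <= i)%N ->
      exists2 i', (i' < i)%N & v_eta z ds i' = (jj - c, c - jj)%N).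
Proof.
move=> Hom; case: i => [|j] // /andP [_ Hj].
have [Ti [S [CX CY]]] := inv_all Hom (ltnW Hj).
have [Ti' E] := step Hom Hj Ti.
have V := vv_XY z ds j.+1.
move: E V; case: ifP => _ [EX EY] V.
- left; exists (XX z ds j.+1); split => // jj /andP [H1 H2].
  case: (leqP jj (XX z ds j.+1)) => Hjj.
    have [i Hi Vi] := CX (XX z ds j.+1 - jj)%N ltac:(lia).
    by exists i => //; rewrite Vi; congr pair; lia.
  have [i Hi Vi] := CY (jj - XX z ds j.+1)%N ltac:(lia).
  by exists i => //; rewrite Vi; congr pair; lia.
- right; exists (YY z ds j.+1); split => // jj /andP [H1 H2].
  case: (leqP jj (YY z ds j.+1)) => Hjj.
    have [i Hi Vi] := CY (YY z ds j.+1 - jj)%N ltac:(lia).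
    by exists i => //; rewrite Vi; congr pair; lia.
  have [i Hi Vi] := CX (jj - YY z ds j.+1)%N ltac:(lia).
  by exists i => //; rewrite Vi; congr pair; lia.
Qed.

Local Open Scope ring_scope.

Lemma ML n z ds l (S : {vspace CLam n}) : in_Omega n z ds -> (l <= n)%N ->
  (forall p, (0 < p <= n)%N -> vbar n (p, p) \in S) ->
  (forall i, (0 < i <= l)%N -> exists s, forall p, (p <= n - i)%N ->
     vbar n ((v_eta z ds i).1 + (s + p), (v_eta z ds i).2 + (s + p))%N \in S) ->
  forall i, (i <= l)%N -> forall q,
     vbar n ((v_eta z ds i).1 + q, (v_eta z ds i).2 + q)%N \in S.
Proof.
move=> Hom Hln H0 Hw.
elim/ltn_ind => i IH Hil.
case: i IH Hil => [|i] IH Hil.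
  rewrite veta0 /= => q.
  have K1 : forall j, (0 < j <= 0)%N -> forall q, vbar n (0 + q, q + j)%N \in S.
    by move=> j /andP [H1 H2]; move: H1; rewrite lt0n; move: H2; rewrite leqn0 => ->.
  have K2 : forall p, (p <= n - 0)%N -> vbar n (0 + (0 + p), 0 + p)%N \in S.
    move=> [|p] Hp; first by rewrite vbar00 mem0v.
    rewrite !add0n; apply: H0; lia.
  exact: (@core _ _ n 0 0 0 (fun x y => vbar n (x, y)) S (leq0n _) (deg_vbar n) K1 K2 q).
have Hi : (0 < i.+1 <= n)%N by apply/andP; split => //; apply: leq_trans Hil Hln.
have [s Hs] := Hw i.+1 ltac:(by apply/andP).
case: (AX Hom Hi) => [[c [Ev Hk]]|[c [Ev Hk]]]; rewrite Ev /= in Hs * => q.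
- have K1 : forall jj, (0 < jj <= i.+1)%N -> forall q', vbar n (c + q', q' + jj)%N \in S.
    move=> jj Hjj q'; have [i' Hi' Ei'] := Hk jj Hjj.
    have := IH i' Hi' (leq_trans (ltnW Hi') Hil) (q' + minn c jj)%N.
    rewrite Ei' /=.
    have -> : (c - jj + (q' + minn c jj), jj - c + (q' + minn c jj))%N = (c + q', q' + jj)%N.
      by congr pair; lia.
    by [].
  have K2 : forall p, (p <= n - i.+1)%N -> vbar n (c + (s + p), s + p)%N \in S.
    by move=> p Hp; rewrite -(add0n (s + p)%N) Hs.
  rewrite add0n.
  exact: (@core _ _ n i.+1 c s (fun x y => vbar n (x, y)) S (leq_trans Hil Hln) (deg_vbar n) K1 K2 q).
- have K1 : forall jj, (0 < jj <= i.+1)%N -> forall q', vbar n (q' + jj, c + q')%N \in S.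
    move=> jj Hjj q'; have [i' Hi' Ei'] := Hk jj Hjj.
    have := IH i' Hi' (leq_trans (ltnW Hi') Hil) (q' + minn c jj)%N.
    rewrite Ei' /=.
    have -> : (jj - c + (q' + minn c jj), c - jj + (q' + minn c jj))%N = (q' + jj, c + q')%N.
      by congr pair; lia.
    by [].
  have K2 : forall p, (p <= n - i.+1)%N -> vbar n (s + p, c + (s + p))%N \in S.
    by move=> p Hp; rewrite -{1}(add0n (s + p)%N) Hs.
  rewrite add0n.
  exact: (@core _ _ n i.+1 c s (fun x y => vbar n (y, x)) S (leq_trans Hil Hln) (deg_swap (deg_vbar n)) K1 K2 q).
Qed.

Local Close Scope ring_scope.

Theorem proposition2p14 (n : nat) (z : bool) (ds : seq nat) (l : nat)
    (r : 'I_l -> nat) :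
  (1 <= n)%N -> in_Omega n z ds -> (1 <= l <= n)%N ->
  spanC n (T_eta n z ds 0 ++
           flatten [seq shiftT (T_eta n z ds i.+1) (r i) | i : 'I_l <- enum 'I_l])
  = spanC n (flatten [seq T_eta n z ds i | i <- iota 0 l.+1])
  /\ (forall rr : nat,
        vbar n ((v_eta z ds l).1 + rr, (v_eta z ds l).2 + rr)
          \in spanC n (flatten [seq T_eta n z ds i | i <- iota 0 l.+1])).
Proof.
move=> Hn Hom /andP [H1l Hln].
set L := flatten [seq T_eta n z ds i | i <- iota 0 l.+1].
set L' := T_eta n z ds 0 ++ _.
have memS : forall (M : seq (nat * nat)) w, w \in M -> vbar n w \in spanC n M.
  by move=> M w Hw; apply: memv_span; apply: map_f.
have T0 : forall p, (0 < p <= n)%N -> (p, p) \in T_eta n z ds 0.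
  by move=> p Hp; rewrite /T_eta eqxx; apply: map_f; rewrite mem_iota; lia.
have Ti : forall i p, (0 < i)%N -> (p <= n - i)%N ->
    ((v_eta z ds i).1 + p, (v_eta z ds i).2 + p)%N \in T_eta n z ds i.
  move=> i p Hi Hp; rewrite /T_eta; case: i Hi Hp => // i _ Hp.
  rewrite (_ : (i.+1 == 0) = false) //.
  by apply/mapP; exists p => //; rewrite mem_iota; lia.
have ML1 := @ML n z ds l (spanC n L) Hom Hln.
have ML2 := @ML n z ds l (spanC n L') Hom Hln.
have HL : forall i q, (i <= l)%N -> vbar n ((v_eta z ds i).1 + q, (v_eta z ds i).2 + q)%N \in spanC n L.
  move=> i q Hi; apply: ML1 => //.
    move=> p Hp; apply: memS; apply/flatten_mapP; exists 0%N; first by rewrite mem_iota.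
    exact: T0.
  move=> i' /andP [Hi'0 Hi'l]; exists 0%N => p Hp; apply: memS.
  apply/flatten_mapP; exists i'; first by rewrite mem_iota; lia.
  by rewrite add0n; apply: Ti.
have HL' : forall i q, (i <= l)%N -> vbar n ((v_eta z ds i).1 + q, (v_eta z ds i).2 + q)%N \in spanC n L'.
  move=> i q Hi; apply: ML2 => //.
    by move=> p Hp; apply: memS; rewrite mem_cat T0.
  move=> i' /andP [Hi'0 Hi'l]; case: i' Hi'0 Hi'l => // i0 _ Hi0.
  exists (r (Ordinal Hi0)) => p Hp; apply: memS.
  rewrite mem_cat; apply/orP; right.
  apply/flatten_mapP; exists (Ordinal Hi0); first by rewrite mem_enum.
  apply/mapP; exists ((v_eta z ds i0.+1).1 + p, (v_eta z ds i0.+1).2 + p)%N.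
    exact: Ti.
  by rewrite /=; congr pair; lia.
split; last by move=> rr; apply: HL.
apply/eqP; rewrite eqEsubv; apply/andP; split; apply/span_subvP => u /mapP [w Hw ->].
- move: Hw; rewrite mem_cat => /orP [Hw|].
    apply: memS; apply/flatten_mapP; exists 0%N => //; by rewrite mem_iota.
  move/flatten_mapP => [i0 _ /mapP [w0 Hw0 ->]].
  move: Hw0; rewrite /T_eta (_ : (i0.+1 == 0) = false) // => /mapP [p Hp ->] /=.
  have := HL i0.+1 (p + r i0)%N (ltn_ord i0).
  by rewrite !addnA.
- move/flatten_mapP: Hw => [i]; rewrite mem_iota => Hi.
  case: i Hi => [|i] Hi Hw.
    by apply: memS; rewrite mem_cat Hw.
  move: Hw; rewrite /T_eta (_ : (i.+1 == 0) = false) // => /mapP [p Hp ->].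
  apply: HL'; lia.
Qed.

Local Close Scope ring_scope.
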